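(* Let $\mathbf T$ be a countably infinite homogeneous tournament and $\mathbf T^*$ an expansion of $\mathbf T$ as in the context. If $\mathrm{Age}(\mathbf T^* )$ has the expansion property relative to $\mathrm{Age}(\mathbf T)$, then $\mathrm{Age}(I_\omega[\mathbf T]^* )$ has the expansion property relative to $\mathrm{Age}(I_\omega[\mathbf T])$, where $I_\omega[\mathbf T]$ is the reduct of $I_\omega[\mathbf T]^*$ to $\{E\}$.
   Context: The age $\mathrm{Age}(\mathbf F)$ of a structure $\mathbf F$ is the class of finite structures embeddable in $\mathbf F$. Expansion property: let $L\subseteq L^*$ be relational languages, $\mathcal K$ a class of finite $L$-structures and $\mathcal K^*$ a class of finite $L^*$-structures whose $L$-reducts lie in $\mathcal K$. $\mathcal K^*$ has the expansion property relative to $\mathcal K$ if for every $\mathbf A\in\mathcal K$ there is $\mathbf B\in\mathcal K$ such that for all $\mathbf A^*,\mathbf B^*\in\mathcal K^*$ whose $L$-reducts are $\mathbf A$ and $\mathbf B$ respectively, $\mathbf A^*$ embeds into $\mathbf B^*$. A tournament is a directed graph in which every pair of distinct vertices carries exactly one directed edge; it is homogeneous if every isomorphism between finite substructures extends to an automorphism. $\mathbf T=(T,E^{\mathbf T})$ is a countable homogeneous tournament, and $\mathbf T^*$ is an expansion of $\mathbf T$ to a countable relational language $L_{\mathbf T^*}\supseteq\{E,<\}$ in which $<$ is interpreted as a linear order $<^*$ on $T$. Fix a linear order $\prec$ on $\mathbb N$ with $(\mathbb N,\prec)\cong(\mathbb Q,<)$. The structure $I_\omega[\mathbf T]^*$ has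 universe $\mathbb N\times T$ and language $L_{\mathbf T^*}$, interpreted as: for each $m$-ary $R\in L_{\mathbf T^*}\setminus\{<\}$ (including $E$), $R((k_1,x_1),\dots,(k_m,x_m))$ iff $k_1=\dots=k_m$ and $R^{\mathbf T^*}(x_1,\dots,x_m)$; and $(i,x)<(j,y)$ iff $i\prec j$, or $i=j$ and $x<^*y$. *)

(* Defs.v *)
From HB Require Import structures.
From mathcomp Require Import all_boot all_order all_algebra.
Set Implicit Arguments. Unset Strict Implicit. Unset Printing Implicit Defensive.
Import Order.TTheory GRing.Theory Num.Theory.

(* An [S]-structure on a universe [U]
   interprets each symbol [s] as a predicate on lists of elements of [U];
   only lists of length [ar s] are meaningful (see [emb]). *)
Definition lstruct (S : Type) (U : Type) := S -> seq U -> Prop.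

Definition estruct (U : Type) := U -> U -> Prop.

Definition emb (S : Type) (ar : S -> nat) (U V : Type)
  (A : lstruct S U) (B : lstruct S V) (f : U -> V) : Prop :=
  injective f /\
  forall (s : S) (l : seq U), size l = ar s -> (A s l <-> B s (map f l)).

Definition embeds (S : Type) (ar : S -> nat) (U V : Type)
  (A : lstruct S U) (B : lstruct S V) : Prop := exists f, emb ar A B f.

Definition eemb (U V : Type) (A : estruct U) (B : estruct V) (f : U -> V) : Prop :=
  injective f /\ forall x y, A x y <-> B (f x) (f y).

Definition lclass (S : Type) := forall U : finType, lstruct S U -> Prop.
Definition eclass := forall U : finType, estruct U -> Prop.

Definition lage (S : Type) (ar : S -> nat) (W : Type) (F : lstruct S W) : lclass S :=
  fun U A => exists f : U -> W, emb ar A F f.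
Definition eage (W : Type) (F : estruct W) : eclass :=
  fun U A => exists f : U -> W, eemb A F f.

Definition ereduct (S : Type) (E : S) (U : Type) (A : lstruct S U) : estruct U :=
  fun x y => A E [:: x; y].

Definition expansion_property (S : Type) (ar : S -> nat) (E : S)
  (Kstar : lclass S) (K : eclass) : Prop :=
  forall (U : finType) (A : estruct U), K U A ->
  exists (V : finType) (B : estruct V), K V B /\
    forall (As : lstruct S U) (Bs : lstruct S V),
      Kstar U As -> Kstar V Bs ->
      (forall x y, ereduct E As x y <-> A x y) ->
      (forall x y, ereduct E Bs x y <-> B x y) ->
      embeds ar As Bs.

Definition tournament (T : Type) (E : estruct T) : Prop :=
  (forall x, ~ E x x) /\
  (forall x y, x <> y -> (E x y \/ E y x)) /\
  (forall x y, E x y -> ~ E y x).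

Definition automorphism (T : Type) (E : estruct T) (g : T -> T) : Prop :=
  bijective g /\ forall x y, E x y <-> E (g x) (g y).

(* Every isomorphism between finite substructures extends to an automorphism:
   a finite substructure is enumerated injectively by a : 'I_n -> T and the
   isomorphism sends a i to b i. *)
Definition homogeneous (T : Type) (E : estruct T) : Prop :=
  forall (n : nat) (a b : 'I_n -> T), injective a -> injective b ->
    (forall i j, E (a i) (a j) <-> E (b i) (b j)) ->
    exists g, automorphism E g /\ forall i, g (a i) = b i.

Definition countably_infinite (T : Type) : Prop :=
  exists f : nat -> T, bijective f.

Definition strict_linear_order (T : Type) (lt : T -> T -> Prop) : Prop :=
  (forall x, ~ lt x x) /\
  (forall x y z, lt x y -> lt y z -> lt x z) /\
  (forall x y, x <> y -> lt x y \/ lt y x).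

Definition Iomega_star (S : eqType) (lt : S) (prec : nat -> nat -> Prop)
  (T : Type) (RT : lstruct S T) : lstruct S (nat * T) :=
  fun s l =>
    if s == lt then
      match l with
      | [:: p; q] => prec p.1 q.1 \/ (p.1 = q.1 /\ RT lt [:: p.2; q.2])
      | _ => False
      end
    else exists k : nat, map fst l = nseq (size l) k /\ RT s (map snd l).

(* Main.v *)
Require Import Defs.
From HB Require Import structures.
From mathcomp Require Import all_boot all_order all_algebra.
Import Order.TTheory GRing.Theory Num.Theory.
Lemma all_nseq_map (X : Type) (F : X -> nat) (L : seq X) (k : nat) :
  all (fun y => F y == k) L -> map F L = nseq (size L) k.
Proof. by elim: L => //= a L IH /andP [/eqP -> /IH ->]. Qed.

Lemma nseq_map_all (X : eqType) (F : X -> nat) (L : seq X) (k : nat) (z : X) :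
  map F L = nseq (size L) k -> z \in L -> F z = k.
Proof.
move=> hm hz; have : F z \in map F L by apply: map_f.
by rewrite hm => /nseqP [].
Qed.

Lemma pair_eq2 (A B : Type) (p q : A * B) : p.1 = q.1 -> p.2 = q.2 -> p = q.
Proof. by case: p q => a b [c d] /= -> ->. Qed.

Lemma sorted_key_lt (X : eqType) (f : X -> rat) (finj : injective f)
  (s : seq X) (x0 : X) (i j : nat) :
  sorted (fun a b => (f a <= f b)%R) s -> uniq s -> i < size s -> j < size s ->
  (f (nth x0 s i) < f (nth x0 s j))%R = (i < j).
Proof.
move=> so us hi hj.
have tr : transitive (fun a b => (f a <= f b)%R).
  by move=> b a c hab hbc; apply: le_trans hab hbc.
case: (ltngtP i j) => [ij|ji|->]; last by rewrite ltxx.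
- rewrite lt_neqAle (sorted_ltn_nth tr x0 so _ _ hi hj ij) andbT.
  apply/negP => /eqP /finj /eqP; rewrite nth_uniq // => /eqP eij.
  by rewrite eij ltnn in ij.
- apply/negbTE; rewrite -leNgt.
  exact: (sorted_ltn_nth tr x0 so _ _ hj hi ji).
Qed.
Arguments pair_eq2 {A B} p q.
Arguments sorted_key_lt {X} f finj s x0 i j.
Arguments nseq_map_all {X} F L k z.
Arguments all_nseq_map {X} F L k.
From Stdlib Require Import Setoid.
Theorem mainTheorem10
  (S : countType) (ar : S -> nat) (E lt : S)
  (hEl : E != lt) (hEar : ar E = 2) (hltar : ar lt = 2)
  (T : Type) (ET : T -> T -> Prop) (RT : S -> seq T -> Prop)
  (hcount : countably_infinite T)
  (htour : tournament ET) (hhom : homogeneous ET)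
  (hexpE : forall x y, RT E [:: x; y] <-> ET x y)
  (hlin : strict_linear_order (fun x y => RT lt [:: x; y]))
  (prec : nat -> nat -> Prop)
  (hprec : exists phi : nat -> rat, bijective phi /\
             forall i j, prec i j <-> (phi i < phi j)%R) :
  expansion_property ar E (lage ar RT) (eage ET) ->
  expansion_property ar E
    (lage ar (Iomega_star lt prec RT))
    (eage (ereduct E (Iomega_star lt prec RT))).
Proof.
move=> hEP U A [f0 [f0inj f0E]].
set Iom := Iomega_star lt prec RT.
case: hcount => e [einv eK Ke].
case: hprec => phi [phibij hphi].
have phiinj := bij_inj phibij.
have einj : injective e by exact: can_inj eK.
case: htour => [Eirr [Etot Easym]].
have precirr : forall k, ~ prec k k by move=> k /hphi; rewrite ltxx.
have redI : forall p q, ereduct E Iom p q <-> p.1 = q.1 /\ ET p.2 q.2.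
  move=> [a t] [b u]; rewrite /ereduct /Iom /Iomega_star (negbTE hEl) /=; split.
  - by case=> k [[-> ->]] /hexpE.
  - by case=> -> h; exists b; split => //; apply/hexpE.
have Isame : forall s L k, map fst L = nseq (size L) k -> size L = ar s ->
    (Iom s L <-> RT s (map snd L)).
  move=> s L k hL hs; rewrite /Iom /Iomega_star; case: (s =P lt) => [sl|ne].
  - subst s; rewrite hltar in hs.
    case: L hL hs => [|p [|q [|? ?]]] //= [hp hq] _; rewrite hp hq.
    by split; [case=> [/precirr []|[_ h]] | right].
  - by split; [case=> k' [_ h] | move=> h; exists k].
have pairne : forall p q : nat * T, p.1 = q.1 -> p <> q -> ET p.2 q.2 \/ ET q.2 p.2.
  move=> [a t] [b u] /= h1 hne; apply: Etot => h2; apply: hne; by rewrite h1 h2.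
have pe : forall p q : nat * T, p.1 = q.1 -> p.2 = q.2 -> p = q by move=> [? ?] [? ?] /= -> ->.
pose K := \max_(x : U) einv (f0 x).2.
pose idx (x : U) : 'I_K.+1 := inord (einv (f0 x).2).
have eidx : forall x, e (idx x) = (f0 x).2.
  by move=> x; rewrite /idx inordK ?Ke // ltnS (@leq_bigmax U (fun y => einv (f0 y).2) x).
pose eI := fun i : 'I_K.+1 => e (nat_of_ord i).
pose AY : estruct 'I_K.+1 := fun i j => ET (eI i) (eI j).
have eIinj : injective eI by move=> i j /einj /ord_inj.
have AYage : eage ET AY by exists eI; split.
case: (hEP _ AY AYage) => V0 [B0 [[g0 [g0inj g0E]] P]].
have [psi0 _] : embeds ar (fun s l => RT s (map eI l)) (fun s l => RT s (map g0 l)).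
  apply: P.
  - by exists eI; split.
  - by exists g0; split.
  - by move=> x y; rewrite /ereduct /=; apply: hexpE.
  - by move=> x y; rewrite /ereduct /=; split => [/hexpE/g0E | /g0E/hexpE].
pose vstar := psi0 ord0.
pose n := #|U|.
pose B : estruct ('I_n.+1 * V0)%type := fun p q => p.1 = q.1 /\ B0 p.2 q.2.
exists ('I_n.+1 * V0)%type, B; split.
  exists (fun p => (nat_of_ord p.1, g0 p.2)); split.
  - by move=> [i v] [j w] [/ord_inj -> /g0inj ->].
  - move=> [i v] [j w]; rewrite redI /B /=; split.
    + by case=> -> /g0E.
    + by case=> /ord_inj -> /g0E.
move=> As Bs [fA [fAinj fAE]] [fB [fBinj fBE]] hAr hBr.
pose bA x := (fA x).1.
have hAedge : forall x y, A x y <-> bA x = bA y /\ ET (fA x).2 (fA y).2.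
  move=> x y; rewrite -hAr /ereduct (fAE E [:: x; y] (esym hEar)); exact: redI.
have hA0 : forall x y, A x y <-> (f0 x).1 = (f0 y).1 /\ ET (f0 x).2 (f0 y).2.
  move=> x y; rewrite f0E; exact: redI.
have hsame : forall x y, bA x = bA y -> (f0 x).1 = (f0 y).1.
  move=> x y hb; case: (x =P y) => [-> //|ne].
  have hne : fA x <> fA y by move/fAinj.
  case: (pairne _ _ hb hne) => h.
  - by have /hA0 [] : A x y by apply/hAedge.
  - by have /hA0 [] : A y x by apply/hAedge.
have hA3 : forall x y, bA x = bA y -> (ET (f0 x).2 (f0 y).2 <-> ET (fA x).2 (fA y).2).
  move=> x y hb; split => h.
  - by have /hAedge [] : A x y by apply/hA0; split => //; apply: hsame.
  - by have /hA0 [] : A x y by apply/hAedge.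
have hBedge : forall p q, B p q <-> (fB p).1 = (fB q).1 /\ ET (fB p).2 (fB q).2.
  move=> p q; rewrite -hBr /ereduct (fBE E [:: p; q] (esym hEar)); exact: redI.
pose cB j := (fB (j, vstar)).1.
have slot : forall j v, (fB (j, v)).1 = cB j.
  move=> j v; case: (v =P vstar) => [-> //|ne].
  have : g0 v <> g0 vstar by move/g0inj.
  case/Etot => /g0E h.
  - by have /hBedge [] : B (j, v) (j, vstar) by [].
  - by have /hBedge [] : B (j, vstar) (j, v) by [].
have cBinj : injective cB.
  move=> i j hij; case: (i =P j) => // ne; exfalso.
  have hne : fB (i, vstar) <> fB (j, vstar) by move/fBinj => [].
  case: (pairne _ _ hij hne) => h.
  - by have /hBedge [] : (fB (i, vstar)).1 = (fB (j, vstar)).1 /\ ET (fB (i, vstar)).2 (fB (j, vstar)).2.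
  - have /hBedge [/= ji _] : (fB (j, vstar)).1 = (fB (i, vstar)).1 /\ ET (fB (j, vstar)).2 (fB (i, vstar)).2 by [].
    by apply: ne.
pose qa x := phi (bA x).
pose RA := sort <=%R (undup (map qa (enum U))).
pose rank x := index (qa x) RA.
pose SB := sort (fun i j : 'I_n.+1 => (phi (cB i) <= phi (cB j))%R) (enum 'I_n.+1).
pose sig x := nth ord0 SB (rank x).
have inRA : forall x, qa x \in RA.
  by move=> x; rewrite mem_sort mem_undup map_f // mem_enum.
have rankS : forall x, rank x < size RA by move=> x; rewrite index_mem.
have sizeRA : size RA <= n.
  by rewrite size_sort (leq_trans (size_undup _)) // size_map -cardT.
have sizeSB : size SB = n.+1 by rewrite size_sort size_enum_ord.
have rankSB : forall x, rank x < size SB.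
  by move=> x; rewrite sizeSB ltnS; apply: ltnW; apply: leq_trans (rankS x) sizeRA.
have RAs : sorted (fun a b => ((fun r : rat => r) a <= (fun r : rat => r) b)%R) RA.
  by apply: sort_sorted => a b; apply: le_total.
have RAu : uniq RA by rewrite sort_uniq undup_uniq.
have SBs : sorted (fun a b => ((fun i => phi (cB i)) a <= (fun i => phi (cB i)) b)%R) SB.
  by apply: sort_sorted => a b; apply: le_total.
have SBu : uniq SB by rewrite sort_uniq enum_uniq.
have qcinj : injective (fun i => phi (cB i)) by move=> i j /phiinj /cBinj.
have hrank : forall x y, (qa x < qa y)%R = (rank x < rank y).
  move=> x y; have := @sorted_key_lt _ (fun r : rat => r) (fun a b h => h) RA 0%R (rank x) (rank y) RAs RAu (rankS x) (rankS y).
  by rewrite !nth_index.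
have hsig : forall x y, (phi (cB (sig x)) < phi (cB (sig y)))%R = (rank x < rank y).
  move=> x y; exact: (@sorted_key_lt _ _ qcinj SB ord0 (rank x) (rank y) SBs SBu (rankSB x) (rankSB y)).
have sig_eq : forall x y, sig x = sig y -> bA x = bA y.
  move=> x y /eqP; rewrite nth_uniq // => /eqP hr.
  by apply: phiinj; rewrite -[phi (bA x)]/(qa x) -(nth_index 0%R (inRA x)) -/(rank x) hr nth_index.
have sig_congr : forall x y, bA x = bA y -> sig x = sig y.
  by move=> x y hb; rewrite /sig /rank /qa hb.
have precsig : forall x y, prec (cB (sig x)) (cB (sig y)) <-> prec (bA x) (bA y).
  by move=> x y; rewrite !hphi hsig -hrank.
pose rep x := odflt x [pick y | bA y == bA x].
have rep_bA : forall x, bA (rep x) = bA x.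
  by move=> x; rewrite /rep; case: pickP => //= y /eqP.
have rep_eq : forall x y, bA x = bA y -> rep x = rep y.
  move=> x y hb; rewrite /rep hb; case: pickP => [z _ //|h].
  by have := h y; rewrite eqxx.
have hg : forall r : U, exists g : T -> T, automorphism ET g /\
    forall y, bA y = bA r -> g (f0 y).2 = (fA y).2.
  move=> r; pose PP := [set y | bA y == bA r].
  have Pr : r \in PP by rewrite inE.
  have bP : forall i j : 'I_#|PP|, bA (enum_val i) = bA (enum_val j).
    by move=> i j; move: (enum_valP i) (enum_valP j); rewrite !inE => /eqP -> /eqP ->.
  have [|||g [ga gb]] := hhom #|PP| (fun i => (f0 (enum_val i)).2) (fun i => (fA (enum_val i)).2).
  - move=> i j h; apply: enum_val_inj; apply: f0inj. apply: pe => //.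
    exact: hsame (bP i j).
  - move=> i j h; apply: enum_val_inj; apply: fAinj; apply: pe => //.
    exact: (bP i j).
  - by move=> i j; apply: hA3.
  exists g; split => // y hy.
  have Py : y \in PP by rewrite inE hy.
  by have := gb (enum_rank_in Pr y); rewrite enum_rankK_in.
have [g hgP] := fin_all_exists hg.
have ginj : forall r, injective (g r) by move=> r; apply: bij_inj; case: (hgP r) => [[]].
have hgA : forall r y, bA y = bA r -> g r (f0 y).2 = (fA y).2 by move=> r; case: (hgP r).
have hgE : forall r a b, ET a b <-> ET (g r a) (g r b) by move=> r; case: (hgP r) => [[]].
pose Ys (r : U) : lstruct S 'I_K.+1 := fun s l => RT s (map (fun i => g r (eI i)) l).
pose Bj (j : 'I_n.+1) : lstruct S V0 := fun s l => Bs s (map (pair j) l).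
have fstB : forall j (l : seq V0), map (fun v => (fB (j, v)).1) l = nseq (size l) (cB j).
  by move=> j; elim=> //= v l ->; rewrite slot.
have hpsi : forall r : U, exists psi : 'I_K.+1 -> V0, emb ar (Ys r) (Bj (sig r)) psi.
  move=> r; apply: P.
  - exists (fun i => g r (eI i)); split => //.
    by move=> i j /ginj /eIinj.
  - exists (fun v => (fB (sig r, v)).2); split.
    + move=> v w h.
      have : fB (sig r, v) = fB (sig r, w) by apply: pe => //; rewrite !slot.
      by move/fBinj => [].
    + move=> s l hs; rewrite /Bj (fBE s _ (etrans (size_map _ _) hs)).
      rewrite (Isame s _ (cB (sig r))).
      * by rewrite -!map_comp.
      * by rewrite -!map_comp size_map -(fstB (sig r) l).
      * by rewrite !size_map.
  - by move=> x y; rewrite /ereduct /Ys /= hexpE -hgE.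
  - by move=> x y; rewrite /ereduct /Bj /= -/(ereduct E Bs _ _) hBr /B /=; split => [[]|].
have [psi hpsiP] := fin_all_exists hpsi.
have psiinj : forall r, injective (psi r) by move=> r; case: (hpsiP r).
pose h x : ('I_n.+1 * V0)%type := (sig x, psi (rep x) (idx x)).
have hslot : forall x, (fB (h x)).1 = cB (sig x) by move=> x; apply: slot.
exists h; split.
  move=> x y [hs hp].
  have bxy := sig_eq _ _ hs.
  rewrite (rep_eq _ _ bxy) in hp.
  have := congr1 e (congr1 val (psiinj _ _ _ hp)); rewrite -/(eI (idx x)) -/(eI (idx y)).
  rewrite /eI !eidx => h2.
  by apply: f0inj; apply: pe => //; apply: hsame.
move=> s [|x0 l] hs.
  have e1 := fAE s [::] hs; have e2 := fBE s [::] hs; simpl in *; tauto.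
set L := x0 :: l.
case: (boolP (all (fun y => bA y == bA x0) L)) => hall.
- pose r := rep x0.
  have hyr : forall y, y \in L -> bA y = bA r.
    by move=> y /(allP hall) /eqP ->; rewrite rep_bA.
  rewrite (fAE s L hs) (Isame s _ (bA x0)); first last.
  + by rewrite size_map.
  + by rewrite -map_comp size_map; apply: all_nseq_map.
  have e3 : map snd (map fA L) = map (fun i => g r (eI i)) (map idx L).
    rewrite -!map_comp; apply/eq_in_map => y Hy /=.
    by rewrite /eI eidx hgA // hyr.
  rewrite e3 -/(Ys r s (map idx L)).
  have [_ psiE] := hpsiP r.
  rewrite (psiE s _ (etrans (size_map _ _) hs)) /Bj.
  have -> : map (pair (sig r)) (map (psi r) (map idx L)) = map h L.
    rewrite -!map_comp; apply/eq_in_map => y Hy /=.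
    have bry : bA y = bA r := hyr y Hy.
    rewrite /h (sig_congr _ _ bry).
    by rewrite (rep_eq y r bry) /r (rep_eq (rep x0) x0 (rep_bA x0)).
  exact: iff_refl.
- move/allPn: hall => [y Hy hne].
  case: (s =P lt) => [sl|sne].
  + subst s; rewrite hltar in hs.
    rewrite /L in Hy *; clear L.
    case: l hs Hy hne => [|y' [|? ?]] //= _.
    rewrite !inE => /orP [/eqP -> | /eqP ->]; first by rewrite eqxx.
    move=> /eqP hne.
    rewrite (fAE lt [:: x0; y'] (esym hltar)) (fBE lt [:: h x0; h y'] (esym hltar)) /Iom /Iomega_star eqxx /=.
    rewrite !hslot.
    have hc : cB (sig x0) <> cB (sig y').
      by move=> hcc; apply: hne; symmetry; apply: sig_eq; apply: cBinj.
    split => [[hp|[hb _]] | [hp|[hb _]]].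
    * by left; apply/precsig.
    * by exfalso; apply: hne; symmetry.
    * by left; apply/precsig.
    * by exfalso; apply: hc.
  + rewrite (fAE s L hs) (fBE s _ (etrans (size_map _ _) hs)) /Iom /Iomega_star.
    have /negbTE -> : s != lt by apply/eqP.
    split => -[k [hk _]]; exfalso.
    * move/negP: hne; apply; apply/eqP.
      rewrite -map_comp size_map in hk.
      have h1 := nseq_map_all _ _ _ _ hk Hy.
      have h2 := nseq_map_all _ _ _ x0 hk (mem_head _ _).
      by move: h1 h2; rewrite /= /bA => -> ->.
    * move/negP: hne; apply; apply/eqP; apply: sig_eq; apply: cBinj.
      rewrite -!map_comp !size_map in hk.
      have h1 := nseq_map_all _ _ _ _ hk Hy.
      have h2 := nseq_map_all _ _ _ x0 hk (mem_head _ _).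
      by move: h1 h2; rewrite /= !hslot => -> ->.
Qed.
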